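(* Let $K$ be a virtual knotoid diagram, let $s$ be a state of $K$, and let $G^s_K$ be the associated marked ribbon graph decorated with signs and arrows. Let $e_+$ and $e_-$ be the numbers of positive and negative edges of $G^s_K$, and define edge weights $b_e=B/A$ if $e$ is positive and $b_e=A/B$ if $e$ is negative. Then \[\langle K\rangle=\frac{A^{e_+}B^{e_-}}{d}\,R_{G^s_K}(1,\mathbf b,d),\] and consequently \[\langle K\rangle_A=\frac{A^{e_+-e_-}}{-A^2-A^{-2}}\,R_{G^s_K}\big(1,\mathbf b|_{B=A^{-1}},-A^2-A^{-2}\big).\]
   Context: Write $I=[0,1]$. A virtual knotoid diagram is an immersion of $I$ into $S^2$ whose singularities are finitely many transversal double points, each decorated either as a classical crossing (with over/under information) or as a virtual crossing; tail = image of $0$, head = image of $1$, oriented tail to head. Oriented state expansion: at each classical crossing there are two smoothings, the Kauffman $A$-smoothing and $B$-smoothing. Exactly one is compatible with the orientation (oriented smoothing); the other (disoriented) reverses the orientation along its arcs, and at each of the two points of reversal an arrow (a mark pointing in one direction along the curve) is placed, oriented counterclockwise around the former crossing. A state $s$ is a choice of smoothing at every classical crossing; it consists of loop components and one arc component (possibly with virtual crossings), decorated with arrows. Reduction: virtual moves (arrows pass virtual crossings) and cancellation of two consecutive arrows pointing in the same direction along a component. Each loop reduces to $K_i$ (a loop with $2i$ alternating arrows, $i\ge0$), and the arc reduces to $\Lambda_i$ or $\Lambda_i'$ (an arc with $2i$ alternating arrows whose first arrow from the tail points along, respectively against, the orientation at the tail). The arrow bracket is \[\langle K\rangle=\sum_s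 A^{a(s)}B^{b(s)}\prod_{\text{loops }C}d\,K_{i(C)}\cdot\Lambda^{(\prime)}_{j(s)}\in\mathbb Z[A,B,d,\{K_i,\Lambda_i,\Lambda_i'\}],\] where $a(s),b(s)$ are the numbers of $A$- and $B$-smoothings, $K_0=\Lambda_0=\Lambda_0'=1$, and $K_i,\Lambda_i,\Lambda_i'$ are commuting variables. The arrow polynomial $\langle K\rangle_A$ is its specialization at $B=A^{-1}$, $d=-A^2-A^{-2}$. A ribbon graph is a surface that is a union of vertex discs and edge discs, each edge disc meeting vertex discs in exactly two disjoint segments (attaching arcs); a marked vertex carries a marking (a boundary point away from attaching arcs) and an orientation of its boundary. The marked ribbon graph $G^s_K$: vertices are discs bounded by the state components of $s$, the arc component giving the marked vertex whose boundary is the arc closed up through the marking joining its endpoints, oriented tail to head. Edges correspond to classical crossings: at each smoothing site a small planar ribbon joins the two opposite arcs of the smoothing. Sign $+$ if $s$ uses the $A$-smoothing there, $-$ otherwise. Each edge gets two arrows running counterclockwise: if the smoothing is oriented, one on each edge boundary arc not meeting a vertex; if disoriented, one on each attaching arc. For a spanning subgraph $F\subseteq E(G)$ of a marked ribbon graph $G$ with one marked vertex, $k(F)$ is its number of components and $\mathrm{bc}(F)$ its number of boundary components; one boundary component passes through the marking, the others form $\partial^c(F)$. After cancelling consecutive equally-directed arrows, a circular component has $2j$ alternating arrows and contributes $K_j$; the marked component, read from the marking along the orientation, contributes $\Lambda_j$ or $\Lambda_j'$ according as its first arrow points along or against the orientation. The arrow Bollobás–Riordan polynomial is \[R_G(a,\mathbf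 b,c)=\sum_{F\subseteq E(G)}a^{k(F)}\Big(\prod_{e\in F}b_e\Big)c^{\mathrm{bc}(F)}\Big(\prod_{f\in\partial^c(F)}K_{j(f)}\Big)\Lambda^{(\prime)}_{j(F)}.\] *)

(* Defs.v *)
From HB Require Import structures.
From mathcomp Require Import all_boot all_order all_algebra.
Set Implicit Arguments. Unset Strict Implicit. Unset Printing Implicit Defensive.
Import Order.TTheory GRing.Theory Num.Theory.
Local Open Scope ring_scope.

(* Arrow words.  A word lists, in the order met along a traversal, the       *)
(* arrows on a curve: true = arrow points along the traversal direction.     *)
Definition red (w : seq bool) : seq bool :=
  foldr (fun b st => match st with
                     | b' :: st' => if b == b' then st' else b :: st
                     | [::] => [:: b] end) [::] w.

(* cyclic reduction: additionally cancel the first and last arrow when they *)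
(* point in the same direction (they are consecutive on a loop).            *)
Fixpoint cstrip (k : nat) (v : seq bool) : seq bool :=
  if k is k'.+1 then
    (if v is x :: v' then
       (if v' is _ :: _ then
          (if x == last x v' then cstrip k' (behead (belast x v')) else v)
        else v)
     else v)
  else v.
Definition cred (w : seq bool) : seq bool := let v := red w in cstrip (size v) v.

(* index i of K_i for a loop with arrow word w *)
Definition jcyc (w : seq bool) : nat := ((size (cred w)) %/ 2)%N.

(* value Lambda_j / Lambda'_j of an arc read from its start *)
Definition lamv (R : Type) (Lv Lv' : nat -> R) (w : seq bool) : R :=
  let v := red w in
  match v with
  | [::] => Lv 0%N
  | b :: _ => if b then Lv ((size v) %/ 2)%N else Lv' ((size v) %/ 2)%N
  end.

(* Virtual knotoid diagrams, encoded by their (signed, over/under) Gauss    *)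
(* code.  With n classical crossings the curve passes 2n times through      *)
(* crossings; passages are numbered 0..2n-1 from tail to head.             *)
(* vk_pass c true / false = passage of the over / under strand at c;       *)
(* vk_pos c = true iff c is a positive crossing.                            *)
Record vkd := VKD {
  vk_n : nat;
  vk_pass : 'I_vk_n -> bool -> 'I_(2 * vk_n);
  vk_pos : 'I_vk_n -> bool }.
Arguments vk_pass : clear implicits.
Arguments vk_pos : clear implicits.

Definition valid_vkd (K : vkd) : Prop :=
  injective (fun cb : 'I_(vk_n K) * bool => vk_pass K cb.1 cb.2).

(* end points at crossings: (p, true) = outgoing end at passage p,         *)
(*                          (p, false) = incoming end at passage p.        *)
Definition CE (K : vkd) := ('I_(2 * vk_n K) * bool)%type.

(* the four ends around crossing c, listed counterclockwise starting from  *)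
(* the outgoing over-strand end (index taken mod 4).                       *)
Definition pt (K : vkd) (c : 'I_(vk_n K)) (k : nat) : CE K :=
  let o := vk_pass K c true in
  let u := vk_pass K c false in
  match (k %% 4)%N with
  | 0 => (o, true)
  | 1 => (u, vk_pos K c)
  | 2 => (o, false)
  | _ => (u, ~~ vk_pos K c)
  end.

Arguments pt : clear implicits.

Definition locate (K : vkd) (q : CE K) : option ('I_(vk_n K) * 'I_4) :=
  [pick ck : 'I_(vk_n K) * 'I_4 | pt K ck.1 ck.2 == q].

(* Kauffman smoothings (sA = true: A-smoothing): the A-smoothing joins    *)
(* ends 1-2 and 3-0, the B-smoothing joins ends 0-1 and 2-3.             *)
Definition partner (sA : bool) (k : nat) : nat :=
  if odd k == sA then k.+1 else (k + 3)%N.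

(* the smoothing at c with choice sA is disoriented *)
Definition disor (K : vkd) (sA : bool) (c : 'I_(vk_n K)) : bool :=
  sA != vk_pos K c.

Arguments disor : clear implicits.

Definition kstate (K : vkd) := {ffun 'I_(vk_n K) -> bool}.

Definition smooth (K : vkd) (s : kstate K) (q : CE K) : CE K :=
  if locate q is Some ck then pt K ck.1 (partner (s ck.1) ck.2) else q.

(* arrow met when following the smoothing arc starting at q; the arrow    *)
(* points counterclockwise around the crossing (from end k to end k+1).    *)
Definition sarrow (K : vkd) (s : kstate K) (q : CE K) : seq bool :=
  if locate q is Some ck then
    (if disor K (s ck.1) ck.1 then [:: odd ck.2 == s ck.1] else [::])
  else [::].

(* arc of the curve leaving end q (closing the arc from the head back to  *)
(* the tail, through the marking).                                         *)
Definition segn (K : vkd) (q : CE K) : CE K :=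
  if q.2 then (ordS q.1, false) else (ord_pred q.1, true).

Definition stepK (K : vkd) (s : kstate K) (q : CE K) : CE K := segn (smooth s q).

Definition wordK (K : vkd) (s : kstate K) (x : CE K) : seq bool :=
  flatten [seq sarrow s y | y <- orbit (stepK s) x].

Definition stconn (K : vkd) (s : kstate K) : rel (CE K) :=
  fun x y => (y == smooth s x) || (y == segn x).

(* the end reached from the tail along the first arc *)
Definition tailpt (K : vkd) : option (CE K) :=
  [pick q : CE K | (nat_of_ord q.1 == 0%N) && ~~ q.2].

Definition loopsK (R : comNzRingType) (K : vkd) (s : kstate K) (d : R)
  (Kv : nat -> R) : R :=
  \prod_(x : CE K | (x \in roots (stconn s)) &&
           (if tailpt K is Some t then ~~ connect (stconn s) t x else true))
     (d * Kv (jcyc (wordK s x))).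

Definition arcK (R : Type) (K : vkd) (s : kstate K) (Lv Lv' : nat -> R) : R :=
  lamv Lv Lv' (if tailpt K is Some t then wordK s t else [::]).

Definition arrow_bracket (R : comNzRingType) (K : vkd) (A B d : R)
  (Kv Lv Lv' : nat -> R) : R :=
  \sum_(s : kstate K)
     A ^+ #|[set c | s c]| * B ^+ #|[set c | ~~ s c]| * loopsK s d Kv * arcK s Lv Lv'.

Definition arrow_poly (R : fieldType) (K : vkd) (A : R) (Kv Lv Lv' : nat -> R) : R :=
  arrow_bracket K A A^-1 (- A ^+ 2 - A ^- 2) Kv Lv Lv'.

(* Marked ribbon graphs with arrows, combinatorially.  Edges 'I_ne.  Each  *)
(* edge e has attaching arcs i (i : bool) with endpoints ("flags")         *)
(* (e,i,j), j : bool; its two remaining boundary arcs (sides) k : bool     *)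
(* join (e,false,k) to (e,true,k).  rg_nu matches each flag with the flag  *)
(* at the other end of the vertex-boundary arc leaving it.  rg_niso counts *)
(* unmarked vertices without attached edges.  rg_mark = Some m: the       *)
(* marking lies on the vertex arc from rg_nu m to m, and the orientation   *)
(* reaches m first; None: the marked vertex has no attached edge.          *)
(* rg_att e i = Some b: arrow on attaching arc i pointing towards (e,i,b); *)
(* rg_side e k = Some b: arrow on side k pointing towards (e,b,k).         *)
(* Vertex arcs carry no arrows.  rg_sign e = true iff e is positive.       *)
Record mrgraph := MRG {
  rg_ne : nat;
  rg_niso : nat;
  rg_nu : 'I_rg_ne * bool * bool -> 'I_rg_ne * bool * bool;
  rg_mark : option ('I_rg_ne * bool * bool);
  rg_sign : 'I_rg_ne -> bool;
  rg_att : 'I_rg_ne -> bool -> option bool;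
  rg_side : 'I_rg_ne -> bool -> option bool }.
Arguments rg_nu : clear implicits.
Arguments rg_mark : clear implicits.
Arguments rg_sign : clear implicits.
Arguments rg_att : clear implicits.
Arguments rg_side : clear implicits.

Definition flag (G : mrgraph) := ('I_(rg_ne G) * bool * bool)%type.

Definition tau0 (G : mrgraph) (x : flag G) : flag G :=
  let: (e, i, j) := x in (e, i, ~~ j).

(* move along the boundary of the subsurface of F at a flag *)
Definition tauF (G : mrgraph) (F : {set 'I_(rg_ne G)}) (x : flag G) : flag G :=
  let: (e, i, j) := x in if e \in F then (e, ~~ i, j) else (e, i, ~~ j).

Definition arrF (G : mrgraph) (F : {set 'I_(rg_ne G)}) (x : flag G) : seq bool :=
  let: (e, i, j) := x in
  if e \in F then (if rg_side G e j is Some b then [:: b == ~~ i] else [::])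
  else (if rg_att G e i is Some b then [:: b == ~~ j] else [::]).

Definition bstep (G : mrgraph) (F : {set 'I_(rg_ne G)}) (x : flag G) : flag G :=
  rg_nu G (tauF F x).

Definition bword (G : mrgraph) (F : {set 'I_(rg_ne G)}) (x : flag G) : seq bool :=
  flatten [seq arrF F y | y <- orbit (bstep F) x].

Definition bconn (G : mrgraph) (F : {set 'I_(rg_ne G)}) : rel (flag G) :=
  fun x y => (y == rg_nu G x) || (y == tauF F x).

Definition vconn (G : mrgraph) (F : {set 'I_(rg_ne G)}) : rel (flag G) :=
  fun x y => [|| y == rg_nu G x, y == tau0 x | y == tauF F x].

Definition extra (G : mrgraph) : nat :=
  (rg_niso G + (if rg_mark G is Some _ then 0 else 1))%N.

Definition kF (G : mrgraph) (F : {set 'I_(rg_ne G)}) : nat :=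
  (#|[pred x | x \in roots (vconn F)]| + extra G)%N.
Definition bcF (G : mrgraph) (F : {set 'I_(rg_ne G)}) : nat :=
  (#|[pred x | x \in roots (bconn F)]| + extra G)%N.

Definition arrowBR (R : comNzRingType) (G : mrgraph) (a c : R) (b : 'I_(rg_ne G) -> R)
  (Kv Lv Lv' : nat -> R) : R :=
  \sum_(F : {set 'I_(rg_ne G)})
     a ^+ kF F * (\prod_(e in F) b e) * c ^+ bcF F *
     ((\prod_(x : flag G | (x \in roots (bconn F)) &&
          (if rg_mark G is Some m then ~~ connect (bconn F) m x else true))
         Kv (jcyc (bword F x))) * Kv 0%N ^+ rg_niso G) *
     lamv Lv Lv' (if rg_mark G is Some m then bword F m else [::]).

(* At crossing c with smoothing choice s c (r = 1 for A, 0 for B) the two  *)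
(* smoothing arcs are {end r, end r+1} (attaching arc false, flags j=false, *)
(* true at ends r, r+1) and {end r+3, end r+2} (attaching arc true, flags   *)
(* j=false,true at ends r+3, r+2); the sides of the ribbon then join        *)
(* (c,false,k) and (c,true,k).                                              *)
Definition fptK (K : vkd) (s : kstate K) (x : 'I_(vk_n K) * bool * bool) : CE K :=
  let: (c, i, j) := x in
  let r := nat_of_bool (s c) in
  pt K c (if i then (r + 3 - j)%N else (r + j)%N).

Definition nuK (K : vkd) (s : kstate K) (x : 'I_(vk_n K) * bool * bool)
  : 'I_(vk_n K) * bool * bool :=
  odflt x [pick y | fptK s y == segn (fptK s x)].

Definition markK (K : vkd) (s : kstate K) : option ('I_(vk_n K) * bool * bool) :=
  [pick y | (nat_of_ord (fptK s y).1 == 0%N) && ~~ (fptK s y).2].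

(* arrows run counterclockwise around each (planar) edge ribbon *)
Definition GsK (K : vkd) (s : kstate K) : mrgraph :=
  @MRG (vk_n K) 0 (nuK s) (markK s) (fun c => s c)
    (fun c i => if disor K (s c) c then Some (~~ i) else None)
    (fun c k => if disor K (s c) c then None else Some k).

Arguments arrowBR {R} G a c b Kv Lv Lv'.
Arguments arrow_bracket {R} K A B d Kv Lv Lv'.
Arguments arrow_poly {R} K A Kv Lv Lv'.

(* Main.v *)
Require Import Defs.
From HB Require Import structures.
From mathcomp Require Import all_boot all_order all_algebra zify ring.
Import Order.TTheory GRing.Theory Num.Theory.
Local Open Scope ring_scope.

Definition eps (b : bool) : int := if b then 1 else -1.
Fixpoint Sw (w : seq bool) : int := if w is b :: w' then eps b - Sw w' else 0.
Definition Jw (w : seq bool) : nat :=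
  if odd (size w) then 0%N else (absz (Sw w) %/ 2)%N.
Definition neqb : rel bool := fun a b => a != b.

Lemma red_cons b w : red (b :: w) =
  match red w with b' :: st' => if b == b' then st' else b :: red w
  | [::] => [:: b] end.
Proof. by []. Qed.

Lemma Sw_red w : Sw (red w) = Sw w.
Proof.
elim: w => [|b w IH] //; rewrite red_cons /= -IH.
case: (red w) => [|b' st] //=.
by case: eqP => [<-|] //=; rewrite opprB addrC subrK.
Qed.

Lemma red_alt w : sorted neqb (red w).
Proof.
elim: w => [|b w IH] //; rewrite red_cons.
case E: (red w) IH => [|b' st] //= H.
case: eqP => [_|/eqP nb]; first by apply: (path_sorted H).
by rewrite /= /neqb nb.
Qed.

Lemma odd_red w : odd (size (red w)) = odd (size w).
Proof.
elim: w => [|b w IH] //; rewrite red_cons /= -IH.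
case: (red w) => [|b' st] //=.
by case: eqP => //= _; rewrite negbK.
Qed.

Lemma alt_Sw v : sorted neqb v -> Sw v = eps (head true v) * (size v)%:Z.
Proof.
elim: v => [|b v IH] //= H.
rewrite IH; last by apply: (path_sorted H).
case: v H {IH} => [|b' v] /=; first by rewrite mulr1 subr0.
case/andP => nb _; have -> : b' = ~~ b by case: b b' nb => [] [].
rewrite -[(size v).+2]addn1 PoszD.
by case: b {nb} => /=; rewrite /eps ?mulN1r ?mul1r ?opprK; lia.
Qed.

Lemma absz_Sw w : absz (Sw w) = size (red w).
Proof.
rewrite -Sw_red alt_Sw ?red_alt //.
by case: (head _ _); rewrite /eps ?mul1r ?mulN1r ?abszN.
Qed.

Lemma last_alt x v : path neqb x v -> last x v = if odd (size v) then ~~ x else x.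
Proof.
elim: v x => [|y v IH] x //= /andP[nxy H].
rewrite IH //; have -> : y = ~~ x by move: nxy; rewrite /neqb; case: x; case: (y).
by case: (odd _); rewrite ?negbK.
Qed.

Lemma cstrip_size k v : (size v <= k)%N -> sorted neqb v ->
  size (cstrip k v) = if odd (size v) then 1%N else size v.
Proof.
elim: k v => [|k IH] [|x [|y v]] //=.
move=> Hs /andP[nxy Hp].
have := @last_alt x (y :: v); rewrite /= nxy Hp => /(_ isT) ->.
rewrite negbK; case E: (odd (size v)) => /=; last by case: x {nxy}.
rewrite eqxx IH ?size_belast ?E //; first lia.
by move: Hp; clear; case/lastP: v => //= v z; rewrite belast_rcons rcons_path => /andP[].
Qed.

Lemma jcycE w : jcyc w = Jw w.
Proof.
rewrite /jcyc /cred /Jw cstrip_size ?red_alt // odd_red absz_Sw.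
by case: (odd _).
Qed.

Lemma Sw_cat u v : Sw (u ++ v) = Sw u + (-1) ^+ (size u) * Sw v.
Proof. elim: u => [|b u IH] /=; first by rewrite add0r mul1r. rewrite IH exprS; ring. Qed.

Lemma Sw_neg w : Sw (map negb w) = - Sw w.
Proof. elim: w => [|b w IH] //=; rewrite IH; case: b; rewrite /eps /=; ring. Qed.

Lemma Sw_rev w : Sw (rev w) = - ((-1) ^+ (size w) * Sw w).
Proof.
elim: w => [|b w IH] /=; first by rewrite mulr0 oppr0.
rewrite rev_cons -cats1 Sw_cat IH size_rev /= exprS; ring.
Qed.

Lemma Jw_neg w : Jw (map negb w) = Jw w.
Proof. by rewrite /Jw size_map Sw_neg abszN. Qed.

Lemma Jw_rev w : Jw (rev w) = Jw w.
Proof. by rewrite /Jw size_rev Sw_rev abszN abszM abszX /= exp1n mul1n. Qed.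

Lemma Jw_catC u v : Jw (u ++ v) = Jw (v ++ u).
Proof.
rewrite /Jw !size_cat addnC; case E: (odd _) => //.
rewrite !Sw_cat; congr (_ %/ _)%N.
move: E; rewrite oddD; case Ou: (odd (size u)); case Ov: (odd (size v)) => //= _.
  rewrite -[(-1) ^+ size u]signr_odd -[(-1) ^+ size v]signr_odd Ou Ov /= !mulN1r -abszN; congr absz; ring.
by rewrite -[(-1) ^+ size u]signr_odd -[(-1) ^+ size v]signr_odd Ou Ov /= !mul1r addrC.
Qed.


Section Transport.
Variables (T T' : finType) (f : T -> T') (g : T' -> T).
Hypotheses (fK : cancel f g) (gK : cancel g f).

Lemma connect_homo (T1 T2 : finType) (h : T1 -> T2) (e1 : rel T1) (e2 : rel T2) :
  (forall x y, e1 x y -> e2 (h x) (h y)) ->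
  forall x y, connect e1 x y -> connect e2 (h x) (h y).
Proof.
move=> He x y /connectP [p Hp ->] {y}.
elim: p x Hp => [|z p IH] x /=; first by rewrite connect0.
case/andP => exz Hp; apply: connect_trans (connect1 (He _ _ exz)) (IH _ Hp).
Qed.

Lemma connect_transport (e : rel T) (e' : rel T') :
  (forall x y, e' (f x) (f y) = e x y) ->
  forall x y, connect e' (f x) (f y) = connect e x y.
Proof.
move=> He x y; apply/idP/idP; last by apply: connect_homo => a b; rewrite He.
move/(@connect_homo _ _ g e' e); rewrite !fK; apply.
by move=> a b; rewrite -He !gK.
Qed.

Lemma orbit_transport (h : T -> T) (h' : T' -> T') :
  injective h -> (forall x, h' (f x) = f (h x)) ->
  forall x, orbit h' (f x) = map f (orbit h x).
Proof.
move=> ih Hh x.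
have finj : injective f by apply: can_inj fK.
have Hc : fcycle h' (map f (orbit h x)).
  rewrite cycle_map; rewrite (@eq_cycle _ _ (frel h)); first exact: cycle_orbit.
  by move=> a b /=; rewrite Hh (inj_eq finj).
rewrite (orbitE Hc); last by apply: map_f; apply: in_orbit.
  by rewrite index_map // -/(findex h x x) findex0 rot0.
by rewrite map_inj_uniq // orbit_uniq.
Qed.

Lemma prod_roots_transport (R : comNzRingType) (e : rel T) (e' : rel T')
  (Hc : forall x y, connect e' (f x) (f y) = connect e x y)
  (se : connect_sym e) (G : T' -> R) (P : pred T') :
  (forall y1 y2, connect e' y1 y2 -> G y1 = G y2) ->
  (forall y1 y2, connect e' y1 y2 -> P y1 = P y2) ->
  \prod_(x | (x \in roots e) && P (f x)) G (f x) =
  \prod_(y | (y \in roots e') && P y) G y.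
Proof.
move=> HG HP.
have se' : connect_sym e'.
  by move=> a b; rewrite -(gK a) -(gK b) !Hc se.
rewrite (reindex_onto (fun x => fingraph.root e' (f x)) (fun y => fingraph.root e (g y))).
  apply: eq_big => x; last first.
    by move=> _; apply: HG; apply: connect_root.
  rewrite !unfold_in /= root_root // eqxx /= -(HP _ _ (connect_root _ _)).
  rewrite andbC; congr (_ && _); congr (_ == _).
  apply/fingraph.rootP => //.
  by rewrite -Hc gK ?[connect e' (fingraph.root _ _) _]se' connect_root.
move=> y /andP [ry _].
rewrite unfold_in in ry; rewrite -{2}(eqP ry); apply/fingraph.rootP => //.
rewrite -{2}(gK y) Hc se; apply: connect_root.
Qed.

End Transport.


Section Knot.
Variables (K : vkd) (HK : valid_vkd K).

Lemma pass_inj c b c' b' : vk_pass K c b = vk_pass K c' b' -> c = c' /\ b = b'.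
Proof. by move=> H; have [] := HK (c, b) (c', b') H. Qed.

Lemma pt_mod c k : pt K c (k %% 4) = pt K c k.
Proof. by rewrite /pt modn_mod. Qed.

Lemma pt_inj {c k c' k'} : pt K c k = pt K c' k' -> c = c' /\ (k %% 4 = k' %% 4)%N.
Proof.
rewrite /pt; have := ltn_pmod k (isT : 0 < 4)%N; have := ltn_pmod k' (isT : 0 < 4)%N.
case: (k %% 4)%N => [|[|[|[|m]]]] //; case: (k' %% 4)%N => [|[|[|[|m']]]] //= _ _;
  move=> /pair_equal_spec [/pass_inj [Ec Hb] Hb2]; subst; move: Hb2;
  case: (vk_pos K c') => /= Hb2; split; congruence.
Qed.

Definition ord4 (k : nat) : 'I_4 := Ordinal (ltn_pmod k (isT : (0 < 4)%N)).

Lemma pt_eq c k k' : (k %% 4 = k' %% 4)%N -> pt K c k = pt K c k'.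
Proof. by move=> H; rewrite -pt_mod H pt_mod. Qed.

Lemma locate_pt c k : locate (pt K c k) = Some (c, ord4 k).
Proof.
rewrite /locate; case: pickP => [[c' k'] /= /eqP H | H].
  have [-> Hk] := pt_inj H; congr (Some (_, _)); apply: val_inj => /=.
  by rewrite -Hk modn_small.
by have := H (c, ord4 k); rewrite /= pt_mod eqxx.
Qed.

Lemma pt_surj q : exists c k, q = pt K c k.
Proof.
have Hinj : injective (fun cb : 'I_(vk_n K) * bool => vk_pass K cb.1 cb.2) := HK.
have Hcard : (#|'I_(2 * vk_n K)| <= #|{: 'I_(vk_n K) * bool}|)%N.
  by rewrite card_prod !card_ord card_bool; lia.
have [gi _ giK] := inj_card_bij Hinj Hcard.
case: q => p b; case E: (gi p) => [c o]; have := giK p; rewrite E /= => Ep.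
exists c; clear E; case: o Ep => Ep.
  by case: b; [exists 0%N | exists 2%N]; rewrite /pt /= Ep.
by case: b; case Hp: (vk_pos K c); [exists 1%N|exists 3%N|exists 3%N|exists 1%N];
  rewrite /pt /= Ep Hp.
Qed.

Lemma smooth_pt (s : kstate K) c k : smooth s (pt K c k) = pt K c (partner (s c) (k %% 4)).
Proof. by rewrite /smooth locate_pt. Qed.

Lemma sarrow_pt (s : kstate K) c k : sarrow s (pt K c k) =
  if disor K (s c) c then [:: odd (k %% 4) == s c] else [::].
Proof. by rewrite /sarrow locate_pt. Qed.

Lemma segnK : involutive (@segn K).
Proof. by case=> p b; rewrite /segn; case: b => /=; rewrite ?ordSK ?ord_predK. Qed.

Lemma smoothK (s : kstate K) : involutive (smooth s).
Proof.
move=> q; have [c [k ->]] := pt_surj q; rewrite !smooth_pt; apply: pt_eq.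
have := ltn_pmod k (isT : (0 < 4)%N).
by case: (k %% 4)%N => [|[|[|[|m]]]] //; case: (s c).
Qed.

Lemma sarrow_smooth (s : kstate K) q : sarrow s (smooth s q) = map negb (sarrow s q).
Proof.
have [c [k ->]] := pt_surj q; rewrite smooth_pt !sarrow_pt.
case: (disor _ _ _) => //=; congr [:: _].
have := ltn_pmod k (isT : (0 < 4)%N).
by case: (k %% 4)%N => [|[|[|[|m]]]] //; case: (s c).
Qed.

Lemma sarrow_rev (s : kstate K) q : rev (sarrow s q) = sarrow s q.
Proof. by rewrite /sarrow; case: (locate q) => [[c k]|] //; case: (disor _ _ _). Qed.

Definition flg := ('I_(vk_n K) * bool * bool)%type.

Lemma fptK_inj (s : kstate K) : injective (@fptK K s).
Proof.
move=> [[c i] j] [[c' i'] j'] /pt_inj [Ec /eqP Hk]; subst c'; move: Hk.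
by case: (s c) i j i' j' => [] [] [] [] [].
Qed.

Lemma fptK_bij (s : kstate K) : bijective (@fptK K s).
Proof.
apply: inj_card_bij; first exact: fptK_inj.
by rewrite !card_prod !card_ord !card_bool; lia.
Qed.


Lemma inv_eqb (T : eqType) (g : T -> T) : involutive g -> forall x y, (y == g x) = (x == g y).
Proof. by move=> gK x y; apply/eqP/eqP => ->; rewrite gK. Qed.

Section States.
Variables (s s' : kstate K) (F : {set 'I_(vk_n K)}).
Hypothesis HF : forall c, (c \in F) = (s' c != s c).

Lemma nuK_spec x : fptK s (nuK s x) = segn (fptK s x).
Proof.
rewrite /nuK; case: pickP => [y /eqP -> // | H].
have [fi fK fiK] := fptK_bij s.
by have := H (fi (segn (fptK s x))); rewrite fiK eqxx.
Qed.

Lemma tau_spec x : fptK s (@tauF (GsK s) F x) = smooth s' (fptK s x).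
Proof.
case: x => [[c i] j]; rewrite /tauF HF /fptK /=.
case Es: (s c); case Es': (s' c); case: i; case: j;
  rewrite /= smooth_pt ?Es ?Es' /=; apply: pt_eq; by [].
Qed.

Lemma arr_spec x : @arrF (GsK s) F x = sarrow s' (fptK s x).
Proof.
case: x => [[c i] j]; rewrite /arrF HF /fptK /= sarrow_pt /disor.
by case Es: (s c); case Es': (s' c); case Hp: (vk_pos K c); case: i; case: j;
  rewrite /= ?Es ?Es' ?Hp.
Qed.

Lemma bconn_spec x y : stconn s' (fptK s x) (fptK s y) = @bconn (GsK s) F x y.
Proof.
by rewrite /stconn /bconn -tau_spec -nuK_spec !(inj_eq (@fptK_inj s)) orbC.
Qed.

Lemma step_spec x : stepK s' (fptK s x) = fptK s (@bstep (GsK s) F x).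
Proof. by rewrite /stepK /bstep -tau_spec nuK_spec. Qed.

Lemma stepK_inj : injective (stepK s').
Proof. by move=> a b /(can_inj segnK)/(can_inj (smoothK s')). Qed.

Lemma bstep_inj : injective (@bstep (GsK s) F).
Proof.
by move=> a b H; apply: (@fptK_inj s); apply: stepK_inj; rewrite !step_spec H.
Qed.

Lemma bword_spec x : @bword (GsK s) F x = wordK s' (fptK s x).
Proof.
have [fi fK fiK] := fptK_bij s.
rewrite /bword /wordK (@orbit_transport _ _ _ _ fK _ _ bstep_inj step_spec) -map_comp.
by congr flatten; apply: eq_map => y; rewrite /= arr_spec.
Qed.

Lemma Jw_rot (L : seq (seq bool)) i : Jw (flatten (rot i L)) = Jw (flatten L).
Proof. by rewrite /rot flatten_cat Jw_catC -flatten_cat cat_take_drop. Qed.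

Lemma Jw_word_step q : Jw (wordK s' (stepK s' q)) = Jw (wordK s' q).
Proof.
have Hc : fcycle (stepK s') (orbit (stepK s') q) := cycle_orbit stepK_inj q.
rewrite /wordK (orbitE Hc (orbit_uniq _ _) (mem_orbit (in_orbit _ _))).
by rewrite map_rot Jw_rot.
Qed.

Lemma Jw_word_smooth q : Jw (wordK s' (smooth s' q)) = Jw (wordK s' q).
Proof.
set O := orbit (stepK s') q.
have Hc : fcycle (stepK s') (map (smooth s') (rev O)).
  rewrite cycle_map rev_cycle (@eq_cycle _ _ (frel (stepK s'))) ?cycle_orbit //;
    first exact: stepK_inj.
  move=> a b /=; rewrite /stepK smoothK.
  by apply/eqP/eqP => <-; rewrite segnK.
have Hu : uniq (map (smooth s') (rev O)).
  by rewrite map_inj_uniq ?rev_uniq ?orbit_uniq //; apply: can_inj (smoothK s').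
have Hm : smooth s' q \in map (smooth s') (rev O).
  by apply: map_f; rewrite mem_rev in_orbit.
rewrite /wordK (orbitE Hc Hu Hm) map_rot Jw_rot -map_comp.
rewrite (@eq_map _ _ _ (map negb \o sarrow s')); last by move=> y; rewrite /= sarrow_smooth.
rewrite map_comp -map_flatten Jw_neg map_rev.
have -> : flatten (rev (map (sarrow s') O)) = rev (flatten (map (sarrow s') O)).
  by rewrite rev_flatten -map_comp (eq_map (sarrow_rev s')).
by rewrite Jw_rev.
Qed.

Lemma Jw_word_conn q1 q2 : connect (stconn s') q1 q2 ->
  Jw (wordK s' q1) = Jw (wordK s' q2).
Proof.
move/connectP => [p Hp ->] {q2}; elim: p q1 Hp => [|z p IH] q1 //= /andP [Hz Hp].
rewrite -(IH z Hp); case/orP: Hz => /eqP ->; first by rewrite Jw_word_smooth.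
have -> : segn q1 = stepK s' (smooth s' q1) by rewrite /stepK smoothK.
by rewrite Jw_word_step Jw_word_smooth.
Qed.

Lemma stconn_sym : connect_sym (stconn s').
Proof.
apply: sym_connect_sym => x y.
by rewrite /stconn (@inv_eqb _ _ (smoothK s')) (@inv_eqb _ _ segnK).
Qed.

End States.
End Knot.


Lemma tail_mark (K : vkd) (HK : valid_vkd K) (s : kstate K) :
  tailpt K = omap (fptK s) (markK s).
Proof.
have [fi fK fiK] := @fptK_bij K HK s.
rewrite /tailpt /markK; case: pickP => [t Ht|H]; case: pickP => [m Hm|H'] /=.
- congr Some; move: Ht Hm; case: (fptK s m) => [p b]; case: t => [p' b'] /=.
  case/andP => /eqP Hp Hb /andP [/eqP Hp' Hb'].
  by congr (_, _); [apply: val_inj; rewrite /= Hp Hp' | move: Hb Hb'; case: b; case: b'].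
- by have := H' (fi t); rewrite fiK Ht.
- by have := H (fptK s m); rewrite Hm.
- by [].
Qed.

Lemma powcard (R : comNzRingType) (I : finType) (p : I -> bool) (A B : R) :
  \prod_c (if p c then A else B) = A ^+ #|[set c | p c]| * B ^+ #|[set c | ~~ p c]|.
Proof.
rewrite (bigID p) /= -!prodr_const; congr (_ * _); apply: eq_big => c;
  rewrite ?inE //=; by case: (p c).
Qed.

Lemma coefE (R : fieldType) (I : finType) (s s' : I -> bool) (X : {set I})
  (HF : forall c, (c \in X) = (s' c != s c)) (A B : R) : A != 0 -> B != 0 ->
  A ^+ #|[set c | s' c]| * B ^+ #|[set c | ~~ s' c]| =
  A ^+ #|[set c | s c]| * B ^+ #|[set c | ~~ s c]| *
  \prod_(c in X) (if s c then B / A else A / B).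
Proof.
move=> HA HB; rewrite -!powcard (big_mkcond (fun c => c \in X)) -big_split.
apply: eq_bigr => c _ /=; rewrite HF; case: (s c); case: (s' c) => /=;
  by rewrite ?mulr1 // mulrC divfK.
Qed.

Lemma part1 (R : fieldType) (K : vkd) (s : kstate K) (A B d : R)
    (Kv Lv Lv' : nat -> R) :
  valid_vkd K -> A != 0 -> B != 0 -> d != 0 ->
  arrow_bracket K A B d Kv Lv Lv' =
    A ^+ #|[set e | s e]| * B ^+ #|[set e | ~~ s e]| / d *
    arrowBR (GsK s) 1 d (fun e => if s e then B / A else A / B) Kv Lv Lv'.
Proof.
move=> HK HA HB Hd.
rewrite /arrow_bracket /arrowBR mulr_sumr.
rewrite (reindex (fun X : {set 'I_(vk_n K)} => [ffun c => (c \in X) (+) s c])) /=;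
  last first.
  apply: onW_bij; exists (fun s' : kstate K => [set c | s' c != s c]) => [X|s'].
    by apply/setP => c; rewrite inE ffunE; case: (c \in X); case: (s c).
  by apply/ffunP => c; rewrite ffunE inE; case: (s' c); case: (s c).
apply: eq_bigr => X _.
set s' : kstate K := [ffun c => _].
have HF : forall c, (c \in X) = (s' c != s c).
  by move=> c; rewrite ffunE; case: (c \in X); case: (s c).
rewrite (@coefE _ _ _ _ _ HF _ _ HA HB) expr1n mul1r expr0 mulr1.
have [fi fK fiK] := @fptK_bij K HK s.
have Htm := @tail_mark K HK s.
set P := (fun q : CE K => if tailpt K is Some t then ~~ connect (stconn s') t q else true).
have Hconn := @connect_transport _ _ _ _ fK fiK _ _ (@bconn_spec K HK s s' X HF).
have Hsym : connect_sym (@bconn (GsK s) X).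
  by move=> x y; rewrite -!Hconn (@stconn_sym K HK).
have HP : forall x, (if markK s is Some m then ~~ connect (@bconn (GsK s) X) m x else true)
    = P (fptK s x).
  by move=> x; rewrite /P Htm; case: (markK s) => [m|] //=; rewrite Hconn.
have HPinv : forall y1 y2, connect (stconn s') y1 y2 -> P y1 = P y2.
  move=> y1 y2 H; rewrite /P; case: (tailpt K) => [t|] //; congr negb.
  apply/idP/idP => H'; first exact: connect_trans H' H.
  by apply: connect_trans H' _; rewrite (@stconn_sym K HK).
have HKp : \prod_(x in roots (@bconn (GsK s) X) |
      (if markK s is Some m then ~~ connect (@bconn (GsK s) X) m x else true))
      Kv (jcyc (@bword (GsK s) X x)) =
    \prod_(q | (q \in roots (stconn s')) && P q) Kv (Jw (wordK s' q)).
  rewrite -(@prod_roots_transport _ _ _ _ fiK _ _ _ Hconn Hsym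
     (fun q => Kv (Jw (wordK s' q))) P).
  - apply: eq_big => x; first by rewrite HP.
    by move=> _; rewrite (@bword_spec K HK s s' X HF) jcycE.
  - by move=> y1 y2 /(@Jw_word_conn K HK s') ->.
  - exact: HPinv.
rewrite HKp; clear HKp.
have Hdp : d ^+ @bcF (GsK s) X = d * \prod_(q | (q \in roots (stconn s')) && P q) d.
  rewrite /bcF /extra /= exprD -prodr_const.
  rewrite (eq_bigl (fun x => (x \in roots (@bconn (GsK s) X)) && true)); last first.
    by move=> x; rewrite inE andbT.
  rewrite (@prod_roots_transport _ _ _ _ fiK _ _ _ Hconn Hsym (fun _ => d) predT) //.
  rewrite /P Htm; case: (markK s) => [m|] /=.
    rewrite expr0 mulr1 (bigD1 (fingraph.root (stconn s') (fptK s m))) /=; last first.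
      by rewrite andbT unfold_in (root_root (@stconn_sym K HK s')).
    congr (_ * _); apply: eq_bigl => q; rewrite andbT.
    case Hq: (q \in roots _) => //=; rewrite unfold_in in Hq.
    rewrite -root_connect; last exact: (@stconn_sym K HK s').
    by rewrite (eqP Hq) eq_sym.
  by rewrite expr1 mulrC; congr (_ * _); apply: eq_bigl => q; rewrite !andbT.
rewrite Hdp; clear Hdp.
have -> : loopsK s' d Kv = \prod_(q | (q \in roots (stconn s')) && P q) d *
    \prod_(q | (q \in roots (stconn s')) && P q) Kv (Jw (wordK s' q)).
  by rewrite /loopsK -big_split; apply: eq_bigr => q _; rewrite jcycE.
rewrite /arcK Htm.
have -> : (if markK s is Some m then @bword (GsK s) X m else [::])
  = (if omap (fptK s) (markK s) is Some t then wordK s' t else [::]).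
  by case: (markK s) => [m|] //=; rewrite (@bword_spec K HK s s' X HF).
by field.
Qed.


Theorem mainTheorem11 (F : fieldType) (K : vkd) (s : kstate K) (A B d : F)
    (Kv Lv Lv' : nat -> F) :
  valid_vkd K -> Kv 0%N = 1 -> Lv 0%N = 1 -> Lv' 0%N = 1 ->
  A != 0 -> B != 0 -> d != 0 ->
  let G := GsK s in
  let ep := #|[set e | rg_sign G e]| in
  let em := #|[set e | ~~ rg_sign G e]| in
  arrow_bracket K A B d Kv Lv Lv' =
    A ^+ ep * B ^+ em / d *
    arrowBR G 1 d (fun e => if rg_sign G e then B / A else A / B) Kv Lv Lv'
  /\
  (- A ^+ 2 - A ^- 2 != 0 ->
   arrow_poly K A Kv Lv Lv' =
    A ^ (ep%:Z - em%:Z) / (- A ^+ 2 - A ^- 2) *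
    arrowBR G 1 (- A ^+ 2 - A ^- 2)
      (fun e => if rg_sign G e then A^-1 / A else A / A^-1) Kv Lv Lv').
Proof.
move=> HK _ _ _ HA HB Hd G ep em; split; first exact: part1.
move=> Hdel; rewrite /arrow_poly (@part1 _ K s _ _ _ Kv Lv Lv' HK HA (invr_neq0 HA) Hdel).
have E : A ^ (- (em%:Z)) = A^-1 ^+ em by rewrite -exprnN exprVn.
by rewrite expfzDr // E.
Qed.
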